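(* Let $M$ (dimension $m$) and $N$ (dimension $n$) be smooth manifolds carrying torsion-free (symmetric) affine connections ${}^M\nabla$ and ${}^N\nabla$, with local components ${}^M\Gamma^k_{ij}(x)$ and ${}^N\Gamma^\sigma_{\alpha\lambda}(\phi)$ in local coordinates $(x^i)$ on $M$ and $(\phi^\sigma)$ on $N$. Consider the fibred manifold $\pi: M\times N\to M$ with adapted coordinates $(x^i,\phi^\sigma)$ and induced jet coordinates $\phi^\sigma_i,\phi^\sigma_{ij}$ on the second jet prolongation. Let $g^{ij}(x)$ be the components of a (symmetric, nondegenerate) inverse metric on $M$, and let $h_{\sigma\nu}(x,\phi)$ be smooth functions, symmetric in $\sigma,\nu$ and nondegenerate, so that for each fixed $x$ they are the components of a metric $h_x$ on $N$ (which may differ from fibre to fibre). Put $B^{ij}_{\sigma\nu}=g^{ij}(x)h_{\sigma\nu}(x,\phi)$ and consider the dynamical form $E=E_\nu\,\omega^\nu\wedge\omega_0$, where $\omega^\nu={\rm d}\phi^\nu-\phi^\nu_i{\rm d}x^i$, $\omega_0={\rm d}x^1\wedge\cdots\wedge{\rm d}x^m$, and $$E_\nu=B^{ij}_{\sigma\nu}\left(\phi^\sigma_{ij}-{}^M\Gamma^k_{ij}\phi^\sigma_k+{}^N\Gamma^\sigma_{\alpha\lambda}\phi^\alpha_i\phi^\lambda_j\right).$$ Suppose that (1) for each fixed $x$, the connection ${}^N\nabla$ is compatible with the metric $h_x$, i.e. $\dfrac{\partial h_{\mu\nu}}{\partial\phi^\lambda}={}^N\Gamma^\sigma_{\mu\lambda}h_{\sigma\nu}+{}^N\Gamma^\sigma_{\nu\lambda}h_{\sigma\mu}$;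 and (2) the dependence of $h$ on the base coordinates is governed by ${}^M\nabla$ and $g$ via $$h_{\mu\nu}\left(g^{ij}\,{}^M\Gamma^l_{ij}+\frac{\partial g^{lp}}{\partial x^p}\right)=-\frac{\partial h_{\mu\nu}}{\partial x^p}\,g^{lp}\quad\text{for all } l,\mu,\nu;$$ equivalently, writing ${}^M\Gamma^l_{ij}={}^M\bar\Gamma^l_{ij}+S^l_{ij}$ with ${}^M\bar\Gamma$ the Levi-Civita connection of $g$ and $S$ a tensor, $g^{ij}S^l_{ij}=-\frac{1}{n}h^{\mu\nu}\frac{\partial h_{\mu\nu}}{\partial x^p}g^{lp}$. Then the dynamical form $E$ is variational, i.e. $B=g\otimes h$ solves the weak inverse problem of the calculus of variations for the geodesic mapping equations $\phi^\sigma_{ij}-{}^M\Gamma^k_{ij}\phi^\sigma_k+{}^N\Gamma^\sigma_{\alpha\lambda}\phi^\alpha_i\phi^\lambda_j=0$. In particular ${}^N\nabla$ must be metric (fibrewise), whereas ${}^M\nabla$ need not be the Levi-Civita connection of $g$.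
   Context: A map $\phi:M\to N$ (immersion, $\dim M\le\dim N$) between manifolds with affine connections is called geodesic if it maps every geodesic curve of $(M,{}^M\nabla)$ to a geodesic curve of $(N,{}^N\nabla)$ (with the same parameter); a sufficient condition is the system $\phi^\sigma_{ij}-{}^M\Gamma^k_{ij}\phi^\sigma_k+{}^N\Gamma^\sigma_{\alpha\lambda}\phi^\alpha_i\phi^\lambda_j=0$. A dynamical form $E=E_\nu\,\omega^\nu\wedge\omega_0$ on the second jet prolongation of $M\times N\to M$ is called variational if it is (locally) the Euler–Lagrange form of some Lagrangian, i.e. $E_\nu=\frac{\partial L}{\partial\phi^\nu}-{\rm d}_k\frac{\partial L}{\partial\phi^\nu_k}+\dots$ for some Lagrangian $L$; the weak inverse problem asks for a multiplier $B^{ij}_{\sigma\nu}(x,\phi)$ (independent of derivatives) making the multiplied equations variational. Here ${\rm d}_k$ denotes the total derivative. *)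

(* Defs.v *)
From HB Require Import structures.
From mathcomp Require Import all_boot all_order all_algebra.
From mathcomp Require Import all_classical all_reals all_analysis.
Set Implicit Arguments. Unset Strict Implicit. Unset Printing Implicit Defensive.
Import Order.TTheory GRing.Theory Num.Theory.
Import numFieldNormedType.Exports.
Local Open Scope ring_scope.
Local Open Scope classical_set_scope.

Section Defs.
Variable R : realType.

Definition ebase (k : nat) (i : 'I_k) : 'rV[R]_k := delta_mx 0 i.

Definition dpart (k : nat) (i : 'I_k) (F : 'rV[R]_k -> R) : 'rV[R]_k -> R :=
  fun z => 'D_(ebase i) F z.

Definition iterD (k : nat) (s : seq 'I_k) (F : 'rV[R]_k -> R) : 'rV[R]_k -> R :=
  foldr (@dpart k) F s.

Definition smooth_on (k : nat) (U : set 'rV[R]_k) (F : 'rV[R]_k -> R) : Prop :=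
  forall s : seq 'I_k, forall z, U z ->
    {for z, continuous (iterD s F)} /\
    (forall i : 'I_k, derivable (iterD s F) z (ebase i)).

Definition smooth_on2 (m n : nat) (U : set 'rV[R]_m) (V : set 'rV[R]_n)
  (F : 'rV[R]_m -> 'rV[R]_n -> R) : Prop :=
  smooth_on [set z : 'rV[R]_(m + n) | U (lsubmx z) /\ V (rsubmx z)]
    (fun z => F (lsubmx z) (rsubmx z)).

(* smoothness of a first-order Lagrangian L(x, phi, phi_i) on U x V x R^{mn}
   (jet coordinate phi^sigma_i is p i sigma) *)
Definition smooth_lagr (m n : nat) (U : set 'rV[R]_m) (V : set 'rV[R]_n)
  (L : 'rV[R]_m -> 'rV[R]_n -> 'M[R]_(m, n) -> R) : Prop :=
  smooth_on [set z : 'rV[R]_(m + n + m * n) |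
               U (lsubmx (lsubmx z)) /\ V (rsubmx (lsubmx z))]
    (fun z => L (lsubmx (lsubmx z)) (rsubmx (lsubmx z)) (vec_mx (rsubmx z))).

Definition smooth_section (m n : nat) (U0 : set 'rV[R]_m) (V0 : set 'rV[R]_n)
  (f : 'rV[R]_m -> 'rV[R]_n) : Prop :=
  (forall x, U0 x -> V0 (f x)) /\
  (forall s : 'I_n, smooth_on U0 (fun x => f x 0 s)).

Definition jet1 (m n : nat) (f : 'rV[R]_m -> 'rV[R]_n) (x : 'rV[R]_m)
  : 'M[R]_(m, n) :=
  \matrix_(i < m, s < n) dpart i (fun y => f y 0 s) x.

Definition jet2 (m n : nat) (f : 'rV[R]_m -> 'rV[R]_n) (i j : 'I_m) (s : 'I_n)
  (x : 'rV[R]_m) : R :=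
  dpart i (dpart j (fun y => f y 0 s)) x.

(* GM k i j = {}^M Gamma^k_{ij},  GN s a l = {}^N Gamma^s_{a l}. *)
Definition geodE (m n : nat)
  (GM : 'I_m -> 'I_m -> 'I_m -> 'rV[R]_m -> R)
  (GN : 'I_n -> 'I_n -> 'I_n -> 'rV[R]_n -> R)
  (g : 'I_m -> 'I_m -> 'rV[R]_m -> R)
  (h : 'I_n -> 'I_n -> 'rV[R]_m -> 'rV[R]_n -> R)
  (f : 'rV[R]_m -> 'rV[R]_n) (nu : 'I_n) (x : 'rV[R]_m) : R :=
  \sum_(s < n) \sum_(i < m) \sum_(j < m)
    g i j x * h s nu x (f x) *
    (jet2 f i j s x
     - \sum_(k < m) GM k i j x * jet1 f x k s
     + \sum_(a < n) \sum_(l < n) GN s a l (f x) * jet1 f x i a * jet1 f x j l).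

(* Euler-Lagrange expression of a first-order Lagrangian L(x, phi, phi_i),
   evaluated along j^2 f at x:
   dL/dphi^nu - d_k (dL/dphi^nu_k)  (total derivatives along the section are
   ordinary derivatives of the composite). *)
Definition dL_dy (m n : nat) (L : 'rV[R]_m -> 'rV[R]_n -> 'M[R]_(m, n) -> R)
  (nu : 'I_n) (x : 'rV[R]_m) (y : 'rV[R]_n) (p : 'M[R]_(m, n)) : R :=
  'D_(ebase nu) (fun y' => L x y' p) y.

Definition dL_dp (m n : nat) (L : 'rV[R]_m -> 'rV[R]_n -> 'M[R]_(m, n) -> R)
  (k : 'I_m) (nu : 'I_n) (x : 'rV[R]_m) (y : 'rV[R]_n) (p : 'M[R]_(m, n)) : R :=
  'D_(delta_mx k nu) (fun p' => L x y p') p.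

Definition EL (m n : nat) (L : 'rV[R]_m -> 'rV[R]_n -> 'M[R]_(m, n) -> R)
  (f : 'rV[R]_m -> 'rV[R]_n) (nu : 'I_n) (x : 'rV[R]_m) : R :=
  dL_dy L nu x (f x) (jet1 f x)
  - \sum_(k < m) dpart k (fun x' => dL_dp L k nu x' (f x') (jet1 f x')) x.

End Defs.

(* Main.v *)
Require Import Defs.
From HB Require Import structures.
From mathcomp Require Import all_boot all_order all_algebra.
From mathcomp Require Import all_classical all_reals all_analysis.
From mathcomp Require Import ring lra.
Import Order.TTheory GRing.Theory Num.Theory.
Import numFieldNormedType.Exports.
Local Open Scope ring_scope.
Local Open Scope classical_set_scope.

Set Implicit Arguments. Unset Strict Implicit. Unset Printing Implicit Defensive.
Module MP1.
Section P1.
Variable R : realType.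

Lemma derive_affine (V1 V2 W : normedModType R) (F : V2 -> W) (a : V1 -> V2)
  (u : V1) (v : V2) (w : V1) :
  (forall t : R, a (t *: u + w) = t *: v + a w) ->
  'D_u (F \o a) w = 'D_v F (a w) /\ (derivable (F \o a) w u <-> derivable F (a w) v).
Proof.
move=> ha.
have E : (fun h : R => h^-1 *: ((F \o a) \o shift w) (h *: u) - h^-1 *: (F \o a) w) =
         (fun h : R => h^-1 *: (F \o shift (a w)) (h *: v) - h^-1 *: F (a w)).
  by apply: funext => t; rewrite /= ha.
rewrite /derive /derivable.
have E2 : (fun h : R => h^-1 *: (((F \o a) \o shift w) (h *: u) - (F \o a) w)) =
         (fun h : R => h^-1 *: ((F \o shift (a w)) (h *: v) - F (a w))).
  by apply: funext => t; rewrite /= ha.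
by rewrite E2.
Qed.


Lemma open_near k (U : set 'rV[R]_k) z : open U -> U z -> \forall y \near z, U y.
Proof. by move=> Uo Uz; move: Uo; rewrite openE => /(_ z Uz). Qed.

Lemma cont_near_eq (T : topologicalType) (f g : T -> R) z :
  (\forall y \near z, f y = g y) -> {for z, continuous f} -> {for z, continuous g}.
Proof.
move=> fg cf.
have e : f z = g z := nbhs_singleton fg.
move: cf; rewrite /prop_for /continuous_at e => cf.
apply: cvg_trans (near_eq_cvg fg) cf.
Qed.

Lemma iterD_rcons k s i (F : 'rV[R]_k -> R) : Defs.iterD (rcons s i) F = Defs.iterD s (dpart i F).
Proof. by rewrite /Defs.iterD foldr_rcons. Qed.

Lemma iterD_loc k (U : set 'rV[R]_k) (F G : 'rV[R]_k -> R) : open U ->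
  (forall z, U z -> F z = G z) -> forall s z, U z -> Defs.iterD s F z = Defs.iterD s G z.
Proof.
move=> Uo FG; elim=> [|i s IH] z Uz /=; first exact: FG.
rewrite /dpart; apply: near_eq_derive.
by apply: filterS (open_near Uo Uz) => y Uy; apply: IH.
Qed.

Definition base k (U : set 'rV[R]_k) (F : 'rV[R]_k -> R) :=
  forall z, U z -> {for z, continuous F} /\ forall i, derivable F z (ebase R i).

Lemma base_near_eq k (U : set 'rV[R]_k) (F G : 'rV[R]_k -> R) z : open U ->
  U z -> (forall y, U y -> F y = G y) ->
  ({for z, continuous F} /\ forall i, derivable F z (ebase R i)) ->
  ({for z, continuous G} /\ forall i, derivable G z (ebase R i)).
Proof.
move=> Uo Uz FG [cF dF].
have nFG : \forall y \near z, F y = G y.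
  by apply: filterS (open_near Uo Uz) => y Uy; apply: FG.
split; first exact: cont_near_eq nFG cF.
move=> i; apply: near_eq_derivable (dF i).
exact: nFG.
Qed.

Lemma smooth_class k (U : set 'rV[R]_k) (K : ('rV[R]_k -> R) -> Prop) : open U ->
  (forall F, K F -> base U F) ->
  (forall F i, K F -> exists F', K F' /\ forall z, U z -> dpart i F z = F' z) ->
  forall F, K F -> smooth_on U F.
Proof.
move=> Uo Kb Kd.
suff H : forall n s, size s = n -> forall F, K F -> forall z, U z ->
    {for z, continuous (Defs.iterD s F)} /\ forall i, derivable (Defs.iterD s F) z (ebase R i).
  by move=> F KF s z Uz; apply: (H _ s erefl).
elim=> [|n IH] s.
  by case: s => // _ F KF z Uz; apply: Kb.
case/lastP: s => [//|s i]; rewrite size_rcons => -[sn] F KF z Uz.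
rewrite iterD_rcons.
have [F' [KF' eF']] := Kd F i KF.
apply: (@base_near_eq _ U (Defs.iterD s F') _ z Uo Uz).
  by move=> y Uy; apply: (iterD_loc Uo) => // w Uw; rewrite eF'.
exact: IH.
Qed.

Lemma smooth_base k (U : set 'rV[R]_k) F : smooth_on U F -> base U F.
Proof. by move=> sF z Uz; apply: (sF [::]). Qed.

Lemma smooth_dpart k (U : set 'rV[R]_k) F i : smooth_on U F -> smooth_on U (dpart i F).
Proof. by move=> sF s z Uz; rewrite -iterD_rcons; apply: sF. Qed.

Lemma smooth_ext k (U : set 'rV[R]_k) F G : open U -> (forall z, U z -> F z = G z) ->
  smooth_on U F -> smooth_on U G.
Proof.
move=> Uo FG sF s z Uz.
apply: (@base_near_eq _ U (Defs.iterD s F) _ z Uo Uz); last exact: sF.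
by move=> y Uy; apply: (iterD_loc Uo).
Qed.


Section Poly.
Variables (k : nat) (U : set 'rV[R]_k).
Hypothesis Uo : open U.

Fixpoint allsm (l : seq (('rV[R]_k -> R) * ('rV[R]_k -> R))) : Prop :=
  match l with [::] => True | p :: l' => [/\ smooth_on U p.1, smooth_on U p.2 & allsm l'] end.

Definition sumprod (l : seq (('rV[R]_k -> R) * ('rV[R]_k -> R))) : 'rV[R]_k -> R :=
  fun z => foldr (fun p acc => p.1 z * p.2 z + acc) 0 l.

Lemma sumprod_base l : allsm l -> base U (sumprod l).
Proof.
elim: l => [|[f g] l IH] /=.
  move=> _ z Uz; split; first exact: cst_continuous.
  by move=> i; exact: derivable_cst.
case=> sf sg /IH bl z Uz.
have [cf df] := smooth_base sf Uz; have [cg dg] := smooth_base sg Uz.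
have [cl dl] := bl z Uz.
split.
  have := continuousD (continuousM cf cg) cl; exact.
move=> i; have := derivableD (derivableM (df i) (dg i)) (dl i); exact.
Qed.

Lemma sumprod_dpart l i : allsm l -> exists l', allsm l' /\
  forall z, U z -> dpart i (sumprod l) z = sumprod l' z.
Proof.
elim: l => [|[f g] l IH] /=.
  exists [::]; split => // z Uz; rewrite /dpart /sumprod /=.
  exact: derive_cst.
case=> sf sg /[dup] al /IH [l' [al' el']].
exists [:: (dpart i f, g), (f, dpart i g) & l']; split.
  by split; [apply: smooth_dpart | | split; [|apply: smooth_dpart|]].
move=> z Uz.
have [cf df] := smooth_base sf Uz; have [cg dg] := smooth_base sg Uz.
have [cl dl] := sumprod_base al Uz.
rewrite /= -(el' z Uz) /dpart.
have -> : sumprod [:: (f, g) & l] = (f * g) + sumprod l by [].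
rewrite deriveD; last exact: dl.
  rewrite deriveM; [|exact: df|exact: dg].
  rewrite /= addrA; congr (_ + _); rewrite addrC.
  by rewrite /GRing.scale /= mulrC [g z * _]mulrC.
exact: derivableM.
Qed.

Lemma smooth_sumprod l : allsm l -> smooth_on U (sumprod l).
Proof.
move=> al.
apply: (@smooth_class _ U (fun F => exists l, allsm l /\ F = sumprod l)) => //.
- by move=> F [l' [al' ->]]; apply: sumprod_base.
- move=> F i [l' [al' ->]].
  have [l'' [al'' e]] := sumprod_dpart i al'.
  by exists (sumprod l''); split => //; exists l''.
- by exists l.
Qed.

Lemma smooth_cst (c : R) : smooth_on U (fun=> c).
Proof.
apply: (@smooth_class _ U (fun F => exists c, F = fun=> c)) => //.
- move=> F [c' ->] z Uz; split; first exact: cst_continuous.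
  by move=> i; exact: derivable_cst.
- move=> F i [c' ->]; exists (fun=> 0); split; first by exists 0.
  by move=> z Uz; rewrite /dpart; exact: derive_cst.
- by exists c.
Qed.

Lemma smooth_mul F G : smooth_on U F -> smooth_on U G -> smooth_on U (fun z => F z * G z).
Proof.
move=> sF sG; apply: (smooth_ext Uo _ (@smooth_sumprod [:: (F, G)] _)).
  by move=> z _; rewrite /sumprod /= addr0.
by split.
Qed.

Lemma smooth_add F G : smooth_on U F -> smooth_on U G -> smooth_on U (fun z => F z + G z).
Proof.
move=> sF sG; apply: (smooth_ext Uo _ (@smooth_sumprod [:: (F, fun=> 1); (G, fun=> 1)] _)).
  by move=> z _; rewrite /sumprod /= addr0 !mulr1.
by split => //; [apply: smooth_cst | split => //; apply: smooth_cst].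
Qed.

Lemma smooth_sum (I : Type) (r : seq I) (F : I -> 'rV[R]_k -> R) :
  (forall i, smooth_on U (F i)) -> smooth_on U (fun z => \sum_(i <- r) F i z).
Proof.
move=> sF; elim: r => [|i r IH].
  by apply: (smooth_ext Uo _ (smooth_cst 0)) => z _; rewrite big_nil.
apply: (smooth_ext Uo _ (smooth_add (sF i) IH)) => z _.
by rewrite big_cons.
Qed.

End Poly.

End P1.

End MP1.
Import MP1.

Module MP2.
Section P2.
Variable R : realType.

Lemma coord_norm a b (v : 'M[R]_(a, b)) i j : `|v i j| <= `|v|.
Proof.
rewrite [leRHS]/Num.Def.normr/= mx_normrE.
by apply: le_trans (le_bigmax _ _ (i, j)).
Qed.

Lemma norm_le_coord a b (v : 'M[R]_(a, b)) c : 0 <= c ->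
  (forall i j, `|v i j| <= c) -> `|v| <= c.
Proof.
move=> c0 H; rewrite [leLHS]/Num.Def.normr/= mx_normrE (bigmax_le _ c0)//= => -[i j] _.
Qed.

Definition ellf a (d : 'I_a -> R) (v : 'rV[R]_a) : R := \sum_i v 0 i * d i.

Lemma ellf_is_linear a (d : 'I_a -> R) : linear (ellf d).
Proof.
move=> c u v; rewrite /ellf scaler_sumr -big_split /=; apply: eq_bigr => i _.
by rewrite !mxE /GRing.scale /= mulrDl mulrA.
Qed.

HB.instance Definition _ a (d : 'I_a -> R) :=
  GRing.isLinear.Build R 'rV[R]_a R _ (ellf d) (ellf_is_linear d).

Lemma cont_ext (T : topologicalType) (f g : T -> R) z :
  (forall y, f y = g y) -> {for z, continuous f} -> {for z, continuous g}.
Proof. by move=> e; have -> : g = f by apply: funext => y; rewrite e. Qed.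

Lemma cont_sum (T : topologicalType) (I : Type) (r : seq I) (G : I -> T -> R) z :
  (forall i, {for z, continuous (G i)}) -> {for z, continuous (fun y => \sum_(i <- r) G i y)}.
Proof.
move=> cG; elim: r => [|i r IH].
  by apply: (cont_ext _ (@cst_continuous _ _ 0 z)) => y; rewrite big_nil.
by apply: (cont_ext _ (continuousD (cG i) IH)) => y; rewrite big_cons.
Qed.

Lemma ellf_cont a (d : 'I_a -> R) : continuous (ellf d).
Proof.
move=> z; apply: cont_sum => i.
have := continuousM (differentiable_continuous (differentiable_coord z 0 i)) (@cst_continuous _ _ (d i) z).
exact.
Qed.


Lemma step a (F : 'rV[R]_a -> R) (w v : 'rV[R]_a) (c d e : R) :
  (forall t, `|t| <= `|c| -> derivable F (w + t *: v) v /\ `|'D_v F (w + t *: v) - d| <= e) ->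
  `|F (w + c *: v) - F w - c * d| <= e * `|c|.
Proof.
move=> H.
pose phi := F \o (fun t : R => w + t *: v).
have aff (t : R) : forall s : R, w + (s *: (1:R) + t) *: v = s *: v + (w + t *: v).
  by move=> s; rewrite scalerDl addrCA [s *: 1]mulr1.
have dphi (t : R) : `|t| <= `|c| -> is_derive t 1 phi ('D_v F (w + t *: v)).
  move=> tc; have [dF _] := H t tc.
  have [E1 E2] := @derive_affine R _ _ _ F (fun t : R => w + t *: v) (1:R) v t (aff t).
  have dp : derivable phi t 1 by apply/E2.
  by rewrite -E1; apply: derivableP.
have phi0 : phi 0 = F w by rewrite /phi /= scale0r addr0.
have phic : phi c = F (w + c *: v) by [].
case: (leP 0 c) => c0.
- have d1 : forall x, x \in `]0, c[%R -> is_derive x 1 phi ('D_v F (w + x *: v)).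
    move=> x; rewrite in_itv /= => /andP[x0 xc]; apply: dphi.
    by rewrite !ger0_norm // ?ltW.
  have c1 : {within `[0, c], continuous phi}.
    apply: derivable_within_continuous => x; rewrite in_itv /= => /andP[x0 xc].
    have xc' : `|x| <= `|c| by rewrite !ger0_norm.
    by case: (dphi x xc').
  have [xi xin E] := @MVT_segment _ phi (fun t => 'D_v F (w + t *: v)) 0 c c0 d1 c1.
  move: xin; rewrite in_itv /= => /andP[x0 xc].
  have xc' : `|xi| <= `|c| by rewrite !ger0_norm.
  rewrite -phic -phi0 E subr0 [c * d]mulrC -mulrBl normrM.
  by rewrite ler_wpM2r // (H xi xc').2.
- have c0' : c <= 0 by rewrite ltW.
  have d1 : forall x, x \in `]c, 0[%R -> is_derive x 1 phi ('D_v F (w + x *: v)).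
    move=> x; rewrite in_itv /= => /andP[x0 xc]; apply: dphi.
    by rewrite (ler0_norm (ltW xc)) (ler0_norm c0') lerN2 ltW.
  have c1 : {within `[c, 0], continuous phi}.
    apply: derivable_within_continuous => x; rewrite in_itv /= => /andP[x0 xc].
    have xc' : `|x| <= `|c| by rewrite (ler0_norm xc) (ler0_norm c0') lerN2.
    by case: (dphi x xc').
  have [xi xin E] := @MVT_segment _ phi (fun t => 'D_v F (w + t *: v)) c 0 c0' d1 c1.
  move: xin; rewrite in_itv /= => /andP[x0 xc].
  have xc' : `|xi| <= `|c| by rewrite (ler0_norm xc) (ler0_norm c0') lerN2.
  have E' : phi c - phi 0 = 'D_v F (w + xi *: v) * c.
    by rewrite -opprB E sub0r mulrN opprK.
  rewrite -phic -phi0 E' [c * d]mulrC -mulrBl normrM.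
  by rewrite ler_wpM2r // (H xi xc').2.
Qed.


Lemma C1_est a (F : 'rV[R]_a -> R) z (δ e : R) : 0 <= e ->
  (forall y, `|y - z| < δ -> forall i, derivable F y (ebase R i) /\
      `|dpart i F y - dpart i F z| <= e) ->
  forall h, `|h| < δ ->
  `|F (h + z) - F z - ellf (fun i => dpart i F z) h| <= a%:R * e * `|h|.
Proof.
move=> e0 H h hd.
pose r (k : nat) : 'rV[R]_a := \row_j (if (j < k)%N then h 0 j else 0).
pose w (k : nat) : 'rV[R]_a := z + r k.
have w0 : w 0%N = z by rewrite /w /r; apply/rowP => j; rewrite !mxE addr0.
have wa : w a = h + z by rewrite /w /r addrC; apply/rowP => j; rewrite !mxE ltn_ord.
have wS (i : 'I_a) : w i.+1 = w i + h 0 i *: ebase R i.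
  rewrite /w /r /ebase; apply/rowP => j; rewrite !mxE /=.
  have [->|nji] := eqVneq j i.
    by rewrite ltnSn ltnn addr0 mulr1.
  have nji' : (j : nat) != i by [].
  rewrite ltnS leq_eqVlt (negbTE nji') /=.
  by rewrite mulr0 addr0.
have tele : F (h + z) - F z = \sum_(i < a) (F (w i.+1) - F (w i)).
  by rewrite -(big_mkord xpredT (fun k => F (w k.+1) - F (w k))) telescope_sumr // wa w0.
rewrite tele /ellf -sumrB.
apply: le_trans (ler_norm_sum _ _ _) _.
apply: (@le_trans _ _ (\sum_(i < a) e * `|h|)); last first.
  by rewrite sumr_const card_ord -mulrA mulr_natl.
apply: ler_sum => i _; rewrite wS.
apply: le_trans (@step _ F (w i) (ebase R i) (h 0 i) (dpart i F z) e _) _; last first.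
  by rewrite ler_wpM2l // coord_norm.
move=> t ht; apply: H.
have -> : w i + t *: ebase R i - z = r i + t *: ebase R i.
  by apply/rowP => j; rewrite /w !mxE; ring.
apply: le_lt_trans hd; apply: norm_le_coord => // i' j; rewrite !mxE /ebase.
have -> : i' = 0 by apply: ord1.
have [->|nji] := eqVneq j i.
  rewrite ltnn eqxx add0r mulr1; apply: le_trans ht _; exact: coord_norm.
rewrite andbF mulr0 addr0; case: ifP => _; first exact: coord_norm.
by rewrite normr0.
Qed.


Lemma C1_diff a (F : 'rV[R]_a -> R) z :
  (\forall y \near z, forall i, derivable F y (ebase R i)) ->
  (forall i, {for z, continuous (dpart i F)}) ->
  differentiable F z.
Proof.
move=> dF cF.
pose d := fun i => dpart i F z.
have est : F \o shift z = cst (F z) + ellf d +o_ 0 id.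
  apply/eqaddoP => eps eps0.
  have a1 : 0 < a%:R + 1 :> R by rewrite natr1 ltr0n.
  pose e := eps / (a%:R + 1).
  have e0 : 0 < e by rewrite divr_gt0.
  have Hn : \forall y \near z, (forall i, derivable F y (ebase R i)) /\
                               forall i, `|dpart i F z - dpart i F y| < e.
    have Hc : \forall y \near z, forall i, `|dpart i F z - dpart i F y| < e.
      have Hi : forall i, \forall y \near z, `|dpart i F z - dpart i F y| < e.
        by move=> i; have /cvgrPdist_lt/(_ e e0) := cF i.
      exact: (@filter_forall _ _ (fun i y => `|dpart i F z - dpart i F y| < e) (nbhs z) _ Hi).
    by near=> y; split; [near: y; exact: dF | near: y; exact: Hc].
  have [δ δ0 Hδ] := (nbhs_ballP _ _).1 Hn.
  apply/nbhs_ballP; exists δ => // h; rewrite -ball_normE /ball_ /= sub0r normrN => hd.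
  have Hy : forall y, `|y - z| < δ -> forall i, derivable F y (ebase R i) /\
      `|dpart i F y - dpart i F z| <= e.
    move=> y yz i; have [] := Hδ y; first by rewrite -ball_normE /ball_ /= distrC.
    by move=> H1 H2; split => //; rewrite distrC ltW.
  have := @C1_est a F z δ e (ltW e0) Hy h hd.
  have -> : (F \o shift z - (cst (F z) + ellf d)) h = F (h + z) - F z - ellf d h.
    by rewrite /= opprD addrA.
  move=> /le_trans; apply.
  rewrite ler_wpM2r //.
  rewrite /e mulrA ler_pdivrMr // mulrC ler_wpM2l ?(ltW eps0) //.
  by rewrite lerDl.
apply/diff_locallyP; rewrite (diff_unique (@ellf_cont a d) est); split => //.
exact: ellf_cont.
Unshelve. all: by end_near.
Qed.


Lemma chain a b (H : 'rV[R]_b -> R) (G : 'rV[R]_a -> 'rV[R]_b) x v :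
  differentiable H (G x) -> derivable G x v ->
  derivable (H \o G) x v /\ 'D_v (H \o G) x = 'd H (G x) ('D_v G x).
Proof.
move=> dH dG.
pose gam := fun t : R => G (t *: v + x).
have gd : differentiable gam 0 by apply/derivable1_diffP; exact: ((derivable1P G x v).1 dG).
have g0 : gam 0 = G x by rewrite /gam scale0r add0r.
have aff : forall t : R, (t *: (1:R) + 0) *: v + x = t *: v + (0 *: v + x).
  by move=> t; rewrite addr0 scale0r add0r [t *: 1]mulr1.
have [E1 E2] := @derive_affine R _ _ _ (H \o G) (fun t : R => t *: v + x) (1:R) v 0 aff.
have [E3 _] := @derive_affine R _ _ _ G (fun t : R => t *: v + x) (1:R) v 0 aff.
have x0 : 0 *: v + x = x by rewrite scale0r add0r.
rewrite x0 in E1 E2 E3.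
have dH' : differentiable H (gam 0) by rewrite g0.
have dHg : differentiable (H \o gam) 0 := differentiable_comp gd dH'.
split; first by apply/E2; apply/derivable1_diffP.
rewrite -E1 -E3.
change ('D_1 (H \o gam) 0 = 'd H (G x) ('D_1 gam 0)).
rewrite (deriveE _ dHg) (diff_comp gd dH') /= (deriveE _ gd) g0.
by [].
Qed.

Lemma diff_expand b (H : 'rV[R]_b -> R) p (w : 'rV[R]_b) :
  differentiable H p -> 'd H p w = \sum_i w 0 i * dpart i H p.
Proof.
move=> dH.
rewrite {1}(matrix_sum_delta w) big_ord1 linear_sum; apply: eq_bigr => j _.
rewrite linearZ /= /dpart /ebase deriveE //.
Qed.

End P2.

End MP2.
Import MP2.

Module MP3.
Section P3.
Variable R : realType.

Definition DD (V : normedModType R) (f : V -> R) x v (d : R) :=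
  derivable f x v /\ 'D_v f x = d.

Lemma DD_sum (V : normedModType R) k (F : 'I_k -> V -> R) x v (G : 'I_k -> R) :
  (forall i, DD (F i) x v (G i)) -> DD (fun y => \sum_i F i y) x v (\sum_i G i).
Proof.
move=> dF; rewrite /DD -fct_sumE; split.
  by apply: derivable_sum => i; case: (dF i).
rewrite derive_sum; last by move=> i; case: (dF i).
by apply: eq_bigr => i _; case: (dF i).
Qed.

Lemma DD_mul (V : normedModType R) (f g : V -> R) x v df dg :
  DD f x v df -> DD g x v dg -> DD (fun y => f y * g y) x v (df * g x + f x * dg).
Proof.
move=> [f1 f2] [g1 g2]; split; first exact: derivableM.
have -> : (fun y => f y * g y) = f * g by [].
by rewrite deriveM // f2 g2 /GRing.scale /= addrC mulrC.
Qed.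

Lemma DD_cst (V : normedModType R) (c : R) x v : DD (fun _ : V => c) x v 0.
Proof. by split; [exact: derivable_cst | exact: derive_cst]. Qed.

Lemma DD_cmul (V : normedModType R) (c : R) (f : V -> R) x v df :
  DD f x v df -> DD (fun y => c * f y) x v (c * df).
Proof.
move=> H; have [d1 d2] := DD_mul (DD_cst c x v) H.
by split => //; rewrite d2 mul0r add0r.
Qed.

Lemma DD_mulc (V : normedModType R) (c : R) (f : V -> R) x v df :
  DD f x v df -> DD (fun y => f y * c) x v (df * c).
Proof.
move=> H; have [d1 d2] := DD_mul H (DD_cst c x v).
by split => //; rewrite d2 mulr0 addr0.
Qed.

Lemma DD_opp (V : normedModType R) (f : V -> R) x v df :
  DD f x v df -> DD (fun y => - f y) x v (- df).
Proof.
move=> H; have [d1 d2] := DD_cmul (-1) H.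
split.
  by have -> : (fun y => - f y) = (fun y => -1 * f y) by apply: funext => y; rewrite mulN1r.
have -> : (fun y => - f y) = (fun y => -1 * f y) by apply: funext => y; rewrite mulN1r.
by rewrite d2 mulN1r.
Qed.

Lemma DD_eq (V : normedModType R) (f : V -> R) x v d d' : DD f x v d -> d = d' -> DD f x v d'.
Proof. by move=> H <-. Qed.

Lemma DD_near (V : normedModType R) (f g : V -> R) x v d :
  (\forall y \near x, f y = g y) -> DD f x v d -> DD g x v d.
Proof.
move=> fg [d1 d2]; split; first exact: near_eq_derivable d1.
by rewrite -(near_eq_derive v fg).
Qed.

Lemma DD_coord a b (M v : 'M[R]_(a, b)) i j : DD (fun N : 'M[R]_(a, b) => N i j) M v (v i j).
Proof.
have aff : forall t : R, (t *: v + M) i j = t *: v i j + M i j by move=> t; rewrite !mxE.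
have [E1 E2] := @derive_affine R _ R^o _ id (fun N : 'M[R]_(a, b) => N i j) v (v i j) M aff.
split; first by apply/E2; exact: derivable_id.
by rewrite E1 derive_id.
Qed.

Lemma pick2 a b (k : 'I_a) (nu : 'I_b) (A : 'I_a -> 'I_b -> R) :
  \sum_i \sum_s (delta_mx k nu : 'M[R]_(a, b)) i s * A i s = A k nu.
Proof.
rewrite (bigD1 k) //= [X in _ + X]big1 => [|i ik]; first last.
  by rewrite big1 // => s _; rewrite mxE (negbTE ik) /= mul0r.
rewrite addr0 (bigD1 nu) //= [X in _ + X]big1 => [|s sn]; first last.
  by rewrite mxE (negbTE sn) andbF mul0r.
by rewrite mxE !eqxx mul1r addr0.
Qed.


Lemma smooth_comp a b (W : set 'rV[R]_a) (D : set 'rV[R]_b) (pi : 'rV[R]_b -> 'rV[R]_a)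
  (sg : 'I_b -> option 'I_a) (F : 'rV[R]_a -> R) :
  open D -> open W -> continuous pi -> (forall z, D z -> W (pi z)) ->
  (forall (t : R) z i, pi (t *: ebase R i + z) = t *: oapp (@ebase R _) 0 (sg i) + pi z) ->
  smooth_on W F -> smooth_on D (F \o pi).
Proof.
move=> Do Wo cpi DW paff sF.
have := (@smooth_class R _ D (fun G => exists F, smooth_on W F /\ G = F \o pi) Do).
move=> H; apply: H; last by exists F.
- move=> G [F' [sF' ->]] z Dz; have [cF dF] := smooth_base sF' (DW z Dz).
  split; first exact: continuous_comp (cpi z) cF.
  move=> i; have [_ E2] := @derive_affine R _ _ _ F' pi (ebase R i) _ z (fun t => paff t z i).
  apply/E2; case: (sg i) => [j|] /=; [exact: dF | exact: derivable0].
- move=> G i [F' [sF' ->]].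
  case E: (sg i) => [j|].
  + exists (dpart j F' \o pi); split.
      by exists (dpart j F'); split => //; exact: smooth_dpart.
    move=> z Dz; have [E1 _] := @derive_affine R _ _ _ F' pi (ebase R i) _ z (fun t => paff t z i).
    by rewrite /dpart E1 E.
  + exists ((fun _ => 0) \o pi); split.
      by exists (fun=> 0); split => //; exact: smooth_cst.
    move=> z Dz; have [E1 _] := @derive_affine R _ _ _ F' pi (ebase R i) _ z (fun t => paff t z i).
    by rewrite /dpart E1 E /= derive0.
Qed.

Definition lsig p q (i : 'I_(p + q)) : option 'I_p :=
  match fintype.split i with inl j => Some j | inr _ => None end.
Definition rsig p q (i : 'I_(p + q)) : option 'I_q :=
  match fintype.split i with inl _ => None | inr j => Some j end.

Lemma ebaseE k (i j : 'I_k) : ebase R i 0 j = (j == i)%:R.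
Proof. by rewrite /ebase mxE eqxx. Qed.

Lemma split_cases p q (i : 'I_(p + q)) :
  (exists k, i = lshift q k /\ fintype.split i = inl k) \/
  (exists k, i = rshift p k /\ fintype.split i = inr k).
Proof.
case: splitP => k ik; [left|right]; exists k; split => //; exact: val_inj.
Qed.

Lemma lsub_aff p q (t : R) (z : 'rV[R]_(p + q)) i :
  lsubmx (t *: ebase R i + z) = t *: oapp (@ebase R _) 0 (lsig i) + lsubmx z.
Proof.
apply/rowP => j; rewrite /lsig; have [[k [-> ->]]|[k [-> ->]]] := split_cases i; rewrite !mxE /= ?ebaseE.
  by rewrite eq_lshift.
by rewrite eq_lrshift.
Qed.

Lemma rsub_aff p q (t : R) (z : 'rV[R]_(p + q)) i :
  rsubmx (t *: ebase R i + z) = t *: oapp (@ebase R _) 0 (rsig i) + rsubmx z.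
Proof.
apply/rowP => j; rewrite /rsig; have [[k [-> ->]]|[k [-> ->]]] := split_cases i; rewrite !mxE /= ?ebaseE.
  by rewrite eq_rlshift.
by rewrite eq_rshift.
Qed.

Lemma row_mx_ebR p q (s : 'I_q) : row_mx (0 : 'rV[R]_p) (ebase R s) = ebase R (rshift p s).
Proof.
apply/rowP => j; have [[k [-> E]]|[k [-> E]]] := split_cases j; rewrite !mxE E /= ?mxE.
  by rewrite eq_lrshift.
by rewrite eq_rshift.
Qed.

Lemma row_mx_ebL p q (s : 'I_p) : row_mx (ebase R s) (0 : 'rV[R]_q) = ebase R (lshift q s).
Proof.
apply/rowP => j; have [[k [-> E]]|[k [-> E]]] := split_cases j; rewrite !mxE E /= ?mxE.
  by rewrite eq_lshift.
by rewrite eq_rlshift.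
Qed.

Lemma row_mx_affR p q (x : 'rV[R]_p) (y : 'rV[R]_q) (t : R) s :
  row_mx x (t *: ebase R s + y) = t *: ebase R (rshift p s) + row_mx x y.
Proof.
by rewrite -row_mx_ebR scale_row_mx add_row_mx scaler0 add0r.
Qed.

Lemma row_mx_affL p q (x : 'rV[R]_p) (y : 'rV[R]_q) (t : R) s :
  row_mx (t *: ebase R s + x) y = t *: ebase R (lshift q s) + row_mx x y.
Proof.
by rewrite -row_mx_ebL scale_row_mx add_row_mx scaler0 add0r.
Qed.

Lemma smooth_coord k (D : set 'rV[R]_k) j : open D -> smooth_on D (fun z => z 0 j).
Proof.
move=> Do.
have := (@smooth_class R _ D (fun G => (exists j, G = fun z => z 0 j) \/ exists c, G = fun=> c) Do).
move=> H; apply: H;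
  last by left; exists j.
- move=> G [[j' ->]|[c ->]] z Dz.
    split; first exact: (differentiable_continuous (differentiable_coord z 0 j')).
    by move=> i; case: (DD_coord z (ebase R i) 0 j').
  split; first exact: cst_continuous.
  by move=> i; exact: derivable_cst.
- move=> G i [[j' ->]|[c ->]].
    exists (fun=> ebase R i 0 j'); split; first by right; eexists.
    by move=> z _; case: (DD_coord z (ebase R i) 0 j').
  exists (fun=> 0); split; first by right; eexists.
  by move=> z _; rewrite /dpart derive_cst.
Qed.

End P3.

End MP3.
Import MP3.

Module MP5.
Section Alg.
Variable R : numFieldType.

Lemma ex_12 (I J : finType) (F : I -> J -> R) : \sum_i \sum_j F i j = \sum_j \sum_i F i j.
Proof. exact: exchange_big. Qed.

Lemma sum_ind (I : finType) (k : I) (A : I -> R) : \sum_i ((i == k)%:R * A i) = A k.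
Proof.
rewrite (bigD1 k) //= eqxx mul1r big1 ?addr0 // => i ik.
by rewrite (negbTE ik) mul0r.
Qed.


Lemma ex_31 (I J K : finType) (F : I -> J -> K -> R) :
  \sum_i \sum_j \sum_k F i j k = \sum_k \sum_i \sum_j F i j k.
Proof.
transitivity (\sum_i \sum_k \sum_j F i j k); first by apply: eq_bigr => i _; exact: ex_12.
exact: ex_12.
Qed.

Lemma half_twice (Y : R) : 2^-1 * (Y + Y) = Y.
Proof.
have h2 : (2 : R) != 0 by rewrite pnatr_eq0.
by field.
Qed.

Lemma perm_23 (I J K L M : finType) (F : I -> J -> K -> L -> M -> R) :
  \sum_i \sum_j \sum_k \sum_l \sum_o F i j k l o = \sum_i \sum_k \sum_j \sum_l \sum_o F i j k l o.
Proof. by apply: eq_bigr => i _; exact: ex_12. Qed.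

Lemma perm_34 (I J K L M : finType) (F : I -> J -> K -> L -> M -> R) :
  \sum_i \sum_j \sum_k \sum_l \sum_o F i j k l o = \sum_i \sum_j \sum_l \sum_k \sum_o F i j k l o.
Proof. by apply: eq_bigr => i _; apply: eq_bigr => j _; exact: ex_12. Qed.

Lemma perm_15 (I J K L M : finType) (F : I -> J -> K -> L -> M -> R) :
  \sum_i \sum_j \sum_k \sum_l \sum_o F i j k l o = \sum_j \sum_k \sum_l \sum_o \sum_i F i j k l o.
Proof.
rewrite ex_12; apply: eq_bigr => j _; rewrite ex_12; apply: eq_bigr => k _.
rewrite ex_12; apply: eq_bigr => l _; exact: ex_12.
Qed.

Lemma perm_Z (I K M : finType) (F : I -> I -> K -> K -> M -> R) :
  \sum_i \sum_j \sum_k \sum_l \sum_o F i j k l o = \sum_i \sum_j \sum_k \sum_l \sum_o F j i l k o.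
Proof.
rewrite ex_12; apply: eq_bigr => i _; apply: eq_bigr => j _; exact: ex_12.
Qed.

Lemma sum5_eq (I J K L M : finType) (F G : I -> J -> K -> L -> M -> R) :
  (forall i j k l o, F i j k l o = G i j k l o) ->
  \sum_i \sum_j \sum_k \sum_l \sum_o F i j k l o = \sum_i \sum_j \sum_k \sum_l \sum_o G i j k l o.
Proof.
move=> e; apply: eq_bigr => i _; apply: eq_bigr => j _; apply: eq_bigr => k _.
by apply: eq_bigr => l _; apply: eq_bigr => o _.
Qed.

Lemma sum5_split (I J K L M : finType) (F G : I -> J -> K -> L -> M -> R) :
  \sum_i \sum_j \sum_k \sum_l \sum_o (F i j k l o + G i j k l o) =
  \sum_i \sum_j \sum_k \sum_l \sum_o F i j k l o + \sum_i \sum_j \sum_k \sum_l \sum_o G i j k l o.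
Proof.
rewrite -big_split; apply: eq_bigr => i _; rewrite -big_split; apply: eq_bigr => j _.
rewrite -big_split; apply: eq_bigr => k _; rewrite -big_split; apply: eq_bigr => l _.
by rewrite -big_split.
Qed.

Section AlgMain.
Variables (m n : nat).
Variables (gx : 'I_m -> 'I_m -> R) (dg : 'I_m -> 'I_m -> 'I_m -> R) (hx : 'I_n -> 'I_n -> R)
  (hX : 'I_m -> 'I_n -> 'I_n -> R) (hY : 'I_n -> 'I_n -> 'I_n -> R)
  (GMx : 'I_m -> 'I_m -> 'I_m -> R) (GNy : 'I_n -> 'I_n -> 'I_n -> R)
  (p : 'I_m -> 'I_n -> R) (q : 'I_m -> 'I_m -> 'I_n -> R) (nu : 'I_n).
Hypotheses (gS : forall i j, gx i j = gx j i) (dgS : forall k i j, dg k i j = dg k j i)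
  (hS : forall s t, hx s t = hx t s) (GNS : forall s a l, GNy s a l = GNy s l a)
  (C1 : forall mu nu la, hY la mu nu = \sum_s (GNy s mu la * hx s nu + GNy s nu la * hx s mu))
  (C2 : forall l mu nu, hx mu nu * (\sum_i \sum_j gx i j * GMx l i j + \sum_p dg p l p)
          = - \sum_p hX p mu nu * gx l p).

Let B1 := \sum_k \sum_j \sum_t (dg k k j * hx nu t + gx k j * hX k nu t) * p j t.
Let B2 := \sum_k \sum_j \sum_t gx k j * (\sum_a p k a * hY a nu t) * p j t.
Let B3 := \sum_k \sum_j \sum_t gx k j * hx nu t * q k j t.
Let T1 := \sum_s \sum_i \sum_j gx i j * hx s nu * q i j s.
Let T2 := \sum_s \sum_i \sum_j - (gx i j * hx s nu * \sum_k GMx k i j * p k s).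
Let T3 := \sum_s \sum_i \sum_j gx i j * hx s nu * (\sum_a \sum_l GNy s a l * p i a * p j l).
Let A := - 2^-1 * (\sum_i \sum_s p i s * \sum_j \sum_t gx i j * hY nu s t * p j t).

Lemma eB : \sum_k \sum_j \sum_t ((dg k k j * hx nu t + gx k j * (hX k nu t + \sum_a p k a * hY a nu t)) * p j t
                 + gx k j * hx nu t * q k j t) = B1 + B2 + B3.
Proof.
rewrite /B1 /B2 /B3 -!big_split; apply: eq_bigr => k _.
rewrite -!big_split; apply: eq_bigr => j _.
rewrite -!big_split; apply: eq_bigr => t _ /=.
ring.
Qed.

Lemma eT : \sum_s \sum_i \sum_j gx i j * hx s nu *
   (q i j s - \sum_k GMx k i j * p k s + \sum_a \sum_l GNy s a l * p i a * p j l) = T1 + T2 + T3.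
Proof.
rewrite /T1 /T2 /T3 -!big_split; apply: eq_bigr => s _.
rewrite -!big_split; apply: eq_bigr => i _.
rewrite -!big_split; apply: eq_bigr => j _ /=.
ring.
Qed.

Lemma eT1 : T1 = B3.
Proof.
rewrite /T1 /B3 ex_12; apply: eq_bigr => i _; rewrite ex_12; apply: eq_bigr => j _.
by apply: eq_bigr => s _; rewrite hS.
Qed.

Lemma eT2 : T2 = B1.
Proof.
have eB1 : B1 = \sum_j \sum_t p j t * (- hx nu t * \sum_i \sum_i' gx i i' * GMx j i i').
  rewrite /B1 ex_12; apply: eq_bigr => j _; rewrite ex_12; apply: eq_bigr => t _.
  have c := C2 j nu t.
  rewrite -big_distrl /= big_split /= mulrC; congr (_ * _).
  have e1 : \sum_k dg k k j * hx nu t = hx nu t * \sum_p dg p j p.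
    by rewrite mulr_sumr; apply: eq_bigr => k _; rewrite dgS mulrC.
  have e2 : \sum_k gx k j * hX k nu t = \sum_p hX p nu t * gx j p.
    by apply: eq_bigr => k _; rewrite gS mulrC.
  rewrite e1 e2; move: c; rewrite mulrDr => c.
  rewrite -[X in _ + X = _]opprK -c; ring.
rewrite eB1 /T2 [RHS]ex_12; apply: eq_bigr => s _.
transitivity (\sum_i \sum_j \sum_k - (gx i j * hx s nu * (GMx k i j * p k s))).
  apply: eq_bigr => i _; apply: eq_bigr => j _.
  by rewrite mulr_sumr -sumrN.
rewrite ex_31; apply: eq_bigr => k _.
rewrite !mulr_sumr; apply: eq_bigr => i _; rewrite !mulr_sumr; apply: eq_bigr => j _.
rewrite hS; ring.
Qed.

Let Y := \sum_i \sum_j \sum_s \sum_t \sum_r gx i j * p i s * p j t * GNy r s nu * hx r t.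
Let Z := \sum_i \sum_j \sum_s \sum_t \sum_r gx i j * p i s * p j t * GNy r t nu * hx r s.
Let X := \sum_i \sum_j \sum_s \sum_t \sum_r gx i j * p i s * p j t * GNy r nu s * hx r t.
Let T3' := \sum_i \sum_j \sum_s \sum_t \sum_r gx i j * p i s * p j t * GNy r t s * hx r nu.

Lemma eA : A = - 2^-1 * (Y + Z).
Proof.
rewrite /A /Y /Z; congr (_ * _).
transitivity (\sum_i \sum_s \sum_j \sum_t \sum_r
    (p i s * (gx i j * (GNy r s nu * hx r t + GNy r t nu * hx r s) * p j t))).
  apply: eq_bigr => i _; apply: eq_bigr => s _; rewrite mulr_sumr; apply: eq_bigr => j _.
  rewrite mulr_sumr; apply: eq_bigr => t _; rewrite C1 mulr_sumr mulr_suml mulr_sumr.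
  by [].
rewrite perm_23 -sum5_split; apply: sum5_eq => i j s t r; ring.
Qed.

Lemma eB2 : B2 = X + T3'.
Proof.
rewrite /B2 /X /T3'.
transitivity (\sum_i \sum_j \sum_t \sum_s \sum_r
    (gx i j * (p i s * (GNy r nu s * hx r t + GNy r t s * hx r nu)) * p j t)).
  apply: eq_bigr => i _; apply: eq_bigr => j _; apply: eq_bigr => t _.
  rewrite mulr_sumr mulr_suml; apply: eq_bigr => s _.
  by rewrite C1 mulr_sumr mulr_sumr mulr_suml.
rewrite perm_34 -sum5_split; apply: sum5_eq => i j s t r; ring.
Qed.

Lemma eT3' : T3 = T3'.
Proof.
rewrite /T3 /T3'.
transitivity (\sum_r \sum_i \sum_j \sum_s \sum_t gx i j * hx r nu * (GNy r s t * p i s * p j t)).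
  apply: eq_bigr => r _; apply: eq_bigr => i _; apply: eq_bigr => j _.
  rewrite mulr_sumr; apply: eq_bigr => s _; by rewrite mulr_sumr.
rewrite perm_15; apply: sum5_eq => i j s t r; rewrite [GNy r s t]GNS; ring.
Qed.

Lemma eZY : Z = Y.
Proof. rewrite /Z /Y perm_Z; apply: sum5_eq => i j s t r; rewrite [gx j i]gS; ring. Qed.

Lemma eXY : X = Y.
Proof. rewrite /X /Y; apply: sum5_eq => i j s t r; rewrite [GNy r nu s]GNS; ring. Qed.

Lemma alg_main :
  \sum_s \sum_i \sum_j gx i j * hx s nu *
   (q i j s - \sum_k GMx k i j * p k s + \sum_a \sum_l GNy s a l * p i a * p j l)
  = - 2^-1 * (\sum_i \sum_s p i s * \sum_j \sum_t gx i j * hY nu s t * p j t)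
    - \sum_k (- \sum_j \sum_t ((dg k k j * hx nu t + gx k j * (hX k nu t + \sum_a p k a * hY a nu t)) * p j t
                 + gx k j * hx nu t * q k j t)).
Proof.
rewrite sumrN opprK eB eT eT1 eT2 eT3'.
have -> : - 2^-1 * (\sum_i \sum_s p i s * \sum_j \sum_t gx i j * hY nu s t * p j t) = A by [].
rewrite eA eB2 eZY eXY.
have h2 := half_twice Y.
rewrite mulNr h2; ring.
Qed.

End AlgMain.

End Alg.

End MP5.
Import MP5.

Module MP4.
Section Main.
Variable R : realType.
Variables (m n : nat) (U : set 'rV[R]_m) (V : set 'rV[R]_n)
  (GM : 'I_m -> 'I_m -> 'I_m -> 'rV[R]_m -> R)
  (GN : 'I_n -> 'I_n -> 'I_n -> 'rV[R]_n -> R)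
  (g : 'I_m -> 'I_m -> 'rV[R]_m -> R)
  (h : 'I_n -> 'I_n -> 'rV[R]_m -> 'rV[R]_n -> R).
Hypotheses (Uo : open U) (Vo : open V)
  (sg : forall i j, smooth_on U (g i j))
  (sh : forall s t, smooth_on2 U V (h s t)).

Definition Hf s t : 'rV[R]_(m + n) -> R := fun w => h s t (lsubmx w) (rsubmx w).
Definition D2 := [set w : 'rV[R]_(m + n) | U (lsubmx w) /\ V (rsubmx w)].

Lemma open_D2 : open D2.
Proof.
have -> : D2 = lsubmx @^-1` U `&` rsubmx @^-1` V by [].
apply: openI; apply: open_comp => //; move=> w _.
  exact: continuous_lsubmx.
exact: continuous_rsubmx.
Qed.

Lemma D2row x y : U x -> V y -> D2 (row_mx x y).
Proof. by move=> Ux Vy; rewrite /D2 /= row_mxKl row_mxKr. Qed.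

Lemma H_diff s t x y : U x -> V y -> differentiable (Hf s t) (row_mx x y).
Proof.
move=> Ux Vy; have Dxy := D2row Ux Vy.
apply: C1_diff.
  apply: filterS (open_near open_D2 Dxy) => w Dw.
  exact: (smooth_base (sh s t) Dw).2.
move=> i; exact: (smooth_base (smooth_dpart i (sh s t)) Dxy).1.
Qed.

Lemma hy_eq s t x : h s t x = Hf s t \o (fun y => row_mx x y).
Proof. by apply: funext => y; rewrite /Hf /= row_mxKl row_mxKr. Qed.

Lemma hx_eq s t y : (fun x => h s t x y) = Hf s t \o (fun x => row_mx x y).
Proof. by apply: funext => x; rewrite /Hf /= row_mxKl row_mxKr. Qed.

Lemma DDhy s t nu x y : U x -> V y -> DD (h s t x) y (ebase R nu) (dpart nu (h s t x) y).
Proof.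
move=> Ux Vy; split => //.
have [_ E2] := @derive_affine R _ _ _ (Hf s t) (fun y => row_mx x y) (ebase R nu)
  (ebase R (rshift m nu)) y (fun t => row_mx_affR x y t nu).
rewrite hy_eq; apply/E2.
exact: (smooth_base (sh s t) (D2row Ux Vy)).2.
Qed.

Lemma dhy s t nu x y : dpart nu (h s t x) y = dpart (rshift m nu) (Hf s t) (row_mx x y).
Proof.
have [E1 _] := @derive_affine R _ _ _ (Hf s t) (fun y => row_mx x y) (ebase R nu)
  (ebase R (rshift m nu)) y (fun t => row_mx_affR x y t nu).
by rewrite /dpart hy_eq E1.
Qed.

Lemma dhx s t k x y : dpart k (fun x => h s t x y) x = dpart (lshift n k) (Hf s t) (row_mx x y).
Proof.
have [E1 _] := @derive_affine R _ _ _ (Hf s t) (fun x => row_mx x y) (ebase R k)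
  (ebase R (lshift n k)) x (fun t => row_mx_affL x y t k).
by rewrite /dpart hx_eq E1.
Qed.


Hypotheses (gsym : forall i j x, U x -> g i j x = g j i x)
  (hsym : forall s t x y, U x -> V y -> h s t x y = h t s x y).

Definition Qf k nu x y (p : 'M[R]_(m, n)) := \sum_j \sum_t g k j x * h nu t x y * p j t.
Definition Lf x y (p : 'M[R]_(m, n)) := - 2^-1 * \sum_i \sum_s p i s * Qf i s x y p.

Lemma dLdy nu x y p : U x -> V y ->
  dL_dy Lf nu x y p = - 2^-1 * \sum_i \sum_s p i s * \sum_j \sum_t g i j x * dpart nu (h s t x) y * p j t.
Proof.
move=> Ux Vy; rewrite /dL_dy /Lf /Qf.
have H : DD (fun y' => - 2^-1 * \sum_i \sum_s p i s * \sum_j \sum_t g i j x * h s t x y' * p j t)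
   y (ebase R nu)
   (- 2^-1 * \sum_i \sum_s p i s * \sum_j \sum_t g i j x * dpart nu (h s t x) y * p j t).
  apply: DD_cmul; apply: DD_sum => i; apply: DD_sum => s; apply: DD_cmul.
  apply: DD_sum => j; apply: DD_sum => t; apply: DD_mulc; apply: DD_cmul.
  exact: DDhy.
by case: H.
Qed.

Lemma dLdp k nu x y p : U x -> V y -> dL_dp Lf k nu x y p = - Qf k nu x y p.
Proof.
move=> Ux Vy; rewrite /dL_dp /Lf.
have H : DD (fun p' : 'M[R]_(m, n) => - 2^-1 * \sum_i \sum_s p' i s * Qf i s x y p')
   p (delta_mx k nu)
   (- 2^-1 * \sum_i \sum_s ((delta_mx k nu : 'M[R]_(m, n)) i s * Qf i s x y p
       + p i s * \sum_j \sum_t g i j x * h s t x y * (delta_mx k nu : 'M[R]_(m, n)) j t)).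
  apply: DD_cmul; apply: DD_sum => i; apply: DD_sum => s; apply: DD_mul.
    exact: DD_coord.
  rewrite /Qf; apply: DD_sum => j; apply: DD_sum => t; apply: DD_cmul.
  exact: DD_coord.
case: H => _ ->.
under eq_bigr => i _ do rewrite big_split /=.
rewrite big_split /= pick2.
have -> : \sum_i \sum_s p i s * \sum_j \sum_t g i j x * h s t x y * (delta_mx k nu : 'M[R]_(m, n)) j t
     = Qf k nu x y p.
  rewrite /Qf; apply: eq_bigr => i _; apply: eq_bigr => s _.
  transitivity (p i s * (g i k x * h s nu x y)).
    congr (_ * _).
    rewrite -(pick2 k nu (fun j t => g i j x * h s t x y)).
    by apply: eq_bigr => j _; apply: eq_bigr => t _; rewrite mulrC.
  by rewrite gsym // hsym // mulrC.
by rewrite mulNr half_twice.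
Qed.


Lemma hcomp s t k x (f : 'rV[R]_m -> 'rV[R]_n) : smooth_section U V f -> U x ->
  DD (fun x' => h s t x' (f x')) x (ebase R k)
     (dpart k (fun x' => h s t x' (f x)) x + \sum_a jet1 f x k a * dpart a (h s t x) (f x)).
Proof.
move=> [fUV sf] Ux.
pose G := fun x' => row_mx x' (f x') : 'rV[R]_(m + n).
have eG : (fun x' => h s t x' (f x')) = Hf s t \o G.
  by apply: funext => x'; rewrite /Hf /G /= row_mxKl row_mxKr.
have dGl : forall c, DD (fun x' => G x' 0 (lshift n c)) x (ebase R k) (c == k)%:R.
  move=> c; have -> : (fun x' => G x' 0 (lshift n c)) = (fun x' => x' 0 c).
    by apply: funext => x'; rewrite /G row_mxEl.
  by rewrite -ebaseE; exact: DD_coord.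
have dGr : forall a, DD (fun x' => G x' 0 (rshift m a)) x (ebase R k) (jet1 f x k a).
  move=> a; have -> : (fun x' => G x' 0 (rshift m a)) = (fun x' => f x' 0 a).
    by apply: funext => x'; rewrite /G row_mxEr.
  split; last by rewrite /jet1 mxE.
  exact: (smooth_base (sf a) Ux).2.
have dG : derivable G x (ebase R k).
  apply/derivable_mxP => i j; rewrite (ord1 i).
  have [[c [-> _]]|[a [-> _]]] := split_cases j; [exact: (dGl c).1 | exact: (dGr a).1].
have Hd : differentiable (Hf s t) (G x) by exact: (H_diff s t Ux (fUV x Ux)).
have [c1 c2] := @chain R m (m + n) (Hf s t) G x (ebase R k) Hd dG.
rewrite eG; split; first exact: c1.
rewrite c2 (diff_expand _ Hd).
rewrite big_split_ord /=.
rewrite (derive_mx dG).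
congr (_ + _).
  rewrite (eq_bigr (fun c => (c == k)%:R * dpart (lshift n c) (Hf s t) (G x))); last first.
    by move=> c _; rewrite mxE (dGl c).2.
  by rewrite sum_ind /G dhx.
apply: eq_bigr => a _; rewrite mxE (dGr a).2 /G dhy //.
Qed.


Lemma EL_eq (f : 'rV[R]_m -> 'rV[R]_n) nu x : smooth_section U V f -> U x ->
  EL Lf f nu x =
  - 2^-1 * (\sum_i \sum_s jet1 f x i s * \sum_j \sum_t g i j x * dpart nu (h s t x) (f x) * jet1 f x j t)
  - \sum_k (- \sum_j \sum_t ((dpart k (g k j) x * h nu t x (f x)
        + g k j x * (dpart k (fun x' => h nu t x' (f x)) x
                     + \sum_a jet1 f x k a * dpart a (h nu t x) (f x))) * jet1 f x j t
        + g k j x * h nu t x (f x) * jet2 f k j t x)).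
Proof.
move=> sf Ux; have [fUV sfc] := sf.
rewrite /EL dLdy //; last exact: fUV.
congr (_ - _); apply: eq_bigr => k _.
have H : DD (fun x' => - \sum_j \sum_t g k j x' * h nu t x' (f x') * jet1 f x' j t) x (ebase R k)
  (- \sum_j \sum_t ((dpart k (g k j) x * h nu t x (f x)
        + g k j x * (dpart k (fun x' => h nu t x' (f x)) x
                     + \sum_a jet1 f x k a * dpart a (h nu t x) (f x))) * jet1 f x j t
        + g k j x * h nu t x (f x) * jet2 f k j t x)).
  apply: DD_opp; apply: DD_sum => j; apply: DD_sum => t; apply: DD_mul.
    apply: DD_mul; last exact: hcomp.
    by split => //; exact: (smooth_base (sg k j) Ux).2.
  have -> : (fun x' => jet1 f x' j t) = (fun x' => dpart j (fun y => f y 0 t) x').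
    by apply: funext => x'; rewrite /jet1 mxE.
  split => //; exact: (smooth_base (smooth_dpart j (sfc t)) Ux).2.
have H' : DD (fun x' => dL_dp Lf k nu x' (f x') (jet1 f x')) x (ebase R k)
  (- \sum_j \sum_t ((dpart k (g k j) x * h nu t x (f x)
        + g k j x * (dpart k (fun x' => h nu t x' (f x)) x
                     + \sum_a jet1 f x k a * dpart a (h nu t x) (f x))) * jet1 f x j t
        + g k j x * h nu t x (f x) * jet2 f k j t x)).
  apply: DD_near H; apply: filterS (open_near Uo Ux) => x' Ux'.
  by rewrite dLdp //; exact: fUV.
by case: H' => _ <-.
Qed.


Lemma smooth_Lf : smooth_lagr U V Lf.
Proof.
rewrite /smooth_lagr.
set D3 := [set z : 'rV[R]_(m + n + m * n) | U (lsubmx (lsubmx z)) /\ V (rsubmx (lsubmx z))].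
have D3o : open D3.
  have -> : D3 = lsubmx @^-1` D2 by [].
  apply: open_comp; last exact: open_D2.
  by move=> z _; exact: continuous_lsubmx.
have cl1 : continuous (lsubmx : 'rV[R]_(m + n + m * n) -> 'rV[R]_(m + n)) by exact: continuous_lsubmx.
have cl2 : continuous (lsubmx : 'rV[R]_(m + n) -> 'rV[R]_m) by exact: continuous_lsubmx.
have sG : forall i j, smooth_on D3 (fun z => g i j (lsubmx (lsubmx z))).
  move=> i j.
  have s2 : smooth_on D2 (g i j \o lsubmx).
    exact: (smooth_comp (sg := @lsig m n) open_D2 Uo cl2 (fun z Dz => proj1 Dz) (@lsub_aff R _ _) (sg i j)).
  have := smooth_comp (sg := @lsig (m + n) (m * n)) D3o open_D2 cl1 _ (@lsub_aff R _ _) s2.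
  by apply => z [].
have sHH : forall s t, smooth_on D3 (fun z => h s t (lsubmx (lsubmx z)) (rsubmx (lsubmx z))).
  move=> s t.
  have := smooth_comp (sg := @lsig (m + n) (m * n)) D3o open_D2 cl1 _ (@lsub_aff R _ _) (sh s t).
  by apply => z [].
have sP : forall i s, smooth_on D3 (fun z => (vec_mx (rsubmx z) : 'M[R]_(m, n)) i s).
  move=> i s; apply: (smooth_ext D3o _ (smooth_coord (rshift (m + n) (mxvec_index i s)) D3o)).
  by move=> z _; rewrite !mxE.
rewrite /Lf /Qf.
apply: smooth_mul => //; first exact: smooth_cst.
apply: smooth_sum => // i; apply: smooth_sum => // s.
apply: smooth_mul => //; try exact: sP.
apply: smooth_sum => // j; apply: smooth_sum => // t.
apply: smooth_mul => //; try exact: sP.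
by apply: smooth_mul => //; try exact: sG; try exact: sHH.
Qed.


Hypotheses (GNsym : forall s a l y, V y -> GN s a l y = GN s l a y)
  (compat1 : forall (mu nu la : 'I_n) x y, U x -> V y ->
     dpart la (h mu nu x) y =
     \sum_(s < n) (GN s mu la y * h s nu x y + GN s nu la y * h s mu x y))
  (compat2 : forall (l : 'I_m) (mu nu : 'I_n) x y, U x -> V y ->
     h mu nu x y * (\sum_(i < m) \sum_(j < m) g i j x * GM l i j x
                    + \sum_(p < m) dpart p (g l p) x)
     = - \sum_(p < m) dpart p (fun x' => h mu nu x' y) x * g l p x).

Lemma geod_EL f nu x : smooth_section U V f -> U x -> geodE GM GN g h f nu x = EL Lf f nu x.
Proof.
move=> sf Ux; have Vfx := sf.1 x Ux.
rewrite EL_eq // /geodE.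
apply: (@alg_main R m n (fun i j => g i j x) (fun k i j => dpart k (g i j) x)
   (fun s t => h s t x (f x))
   (fun k s t => dpart k (fun x' => h s t x' (f x)) x) (fun a s t => dpart a (h s t x) (f x))
   (fun k i j => GM k i j x) (fun s a l => GN s a l (f x)) (fun i s => jet1 f x i s)
   (fun i j s => jet2 f i j s x) nu).
- by move=> i j; apply: gsym.
- move=> k i j; rewrite /dpart; apply: near_eq_derive.
  by apply: filterS (open_near Uo Ux) => x' Ux'; exact: gsym.
- by move=> s t; apply: hsym.
- by move=> s a l; apply: GNsym.
- by move=> mu nu' la; apply: compat1.
- by move=> l mu nu'; apply: compat2.
Qed.

End Main.

End MP4.
Import MP4.

Unset Implicit Arguments. Set Strict Implicit. Set Printing Implicit Defensive.

Theorem mainTheorem1 (R : realType) (m n : nat)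
  (U : set 'rV[R]_m) (V : set 'rV[R]_n)
  (GM : 'I_m -> 'I_m -> 'I_m -> 'rV[R]_m -> R)
  (GN : 'I_n -> 'I_n -> 'I_n -> 'rV[R]_n -> R)
  (g : 'I_m -> 'I_m -> 'rV[R]_m -> R)
  (h : 'I_n -> 'I_n -> 'rV[R]_m -> 'rV[R]_n -> R) :
  open U -> open V ->
  (* smooth data *)
  (forall k i j, smooth_on U (GM k i j)) ->
  (forall s a l, smooth_on V (GN s a l)) ->
  (forall i j, smooth_on U (g i j)) ->
  (forall s t, smooth_on2 U V (h s t)) ->
  (* torsion-free connections *)
  (forall k i j x, U x -> GM k i j x = GM k j i x) ->
  (forall s a l y, V y -> GN s a l y = GN s l a y) ->
  (* g symmetric nondegenerate inverse metric *)
  (forall i j x, U x -> g i j x = g j i x) ->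
  (forall x, U x -> \det (\matrix_(i < m, j < m) g i j x) != 0) ->
  (* h_x symmetric nondegenerate metric on each fibre *)
  (forall s t x y, U x -> V y -> h s t x y = h t s x y) ->
  (forall x y, U x -> V y -> \det (\matrix_(s < n, t < n) h s t x y) != 0) ->
  (* (1) fibrewise metric compatibility of the connection on N *)
  (forall (mu nu la : 'I_n) x y, U x -> V y ->
     dpart la (h mu nu x) y =
     \sum_(s < n) (GN s mu la y * h s nu x y + GN s nu la y * h s mu x y)) ->
  (* (2) dependence of h on the base coordinates *)
  (forall (l : 'I_m) (mu nu : 'I_n) x y, U x -> V y ->
     h mu nu x y * (\sum_(i < m) \sum_(j < m) g i j x * GM l i j x
                    + \sum_(p < m) dpart p (g l p) x)
     = - \sum_(p < m) dpart p (fun x' => h mu nu x' y) x * g l p x) ->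
  (* conclusion: E is (locally) variational *)
  forall x0 y0, U x0 -> V y0 ->
  exists (U0 : set 'rV[R]_m) (V0 : set 'rV[R]_n)
         (L : 'rV[R]_m -> 'rV[R]_n -> 'M[R]_(m, n) -> R),
    [/\ open U0 /\ open V0, U0 `<=` U /\ V0 `<=` V, U0 x0 /\ V0 y0,
        smooth_lagr U0 V0 L &
        forall f : 'rV[R]_m -> 'rV[R]_n, smooth_section U0 V0 f ->
        forall (nu : 'I_n) x, U0 x -> geodE GM GN g h f nu x = EL L f nu x].
Proof.
move=> Uo Vo sGM sGN sg sh GMsym GNsym gsym gdet hsym hdet c1 c2 x0 y0 Ux0 Vy0.
exists U, V, (Lf g h).
split; [by split | by split => ? ? | by split | exact: (smooth_Lf Uo Vo sg sh) | ].
move=> f sf nu x Ux.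
exact: (geod_EL Uo Vo sg sh gsym hsym GNsym c1 c2 nu sf Ux).
Qed.
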